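(* Let $(N,v)$ be a balanced game. The set $\mathscr{E}(N,v)$ of effective coalitions equals the union of all minimal balanced collections $\mathscr{B}$ on $N$ such that $\sum_{S\in\mathscr{B}}\lambda^{\mathscr{B}}_S v(S)=v(N)$, where $\lambda^{\mathscr{B}}$ denotes the (unique) balancing weights of $\mathscr{B}$.
   Context: A game $(N,v)$: $N$ finite nonempty, $v:2^N\to\mathbb{R}$, $v(\varnothing)=0$; $x(S)=\sum_{i\in S}x_i$. Core: $C(N,v)=\{x\in\mathbb{R}^N\mid x(N)=v(N),\ x(S)\ge v(S)\ \forall S\subseteq N\}$; the game is balanced if $C(N,v)\ne\varnothing$. A coalition (nonempty $S\subseteq N$) is effective if $x(S)=v(S)$ for all $x\in C(N,v)$; $\mathscr{E}(N,v)$ is the set of effective coalitions. A collection $\mathscr{B}$ of nonempty subsets of $N$ is balanced if there exist positive weights $(\lambda_S)_{S\in\mathscr{B}}$ with $\sum_{S\in\mathscr{B}}\lambda_S\mathbf{1}^S=\mathbf{1}^N$ ($\mathbf{1}^S$ the characteristic vector); it is minimal if it contains no balanced proper subcollection, equivalently its balancing weights are unique. *)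

(* Defs.v *)
From mathcomp Require Import all_boot all_order all_algebra.
Set Implicit Arguments. Unset Strict Implicit. Unset Printing Implicit Defensive.
Import Order.TTheory GRing.Theory Num.Theory.
Local Open Scope ring_scope.

Section Games.
Variables (R : realFieldType) (N : finType).

Definition xsum (x : N -> R) (S : {set N}) : R := \sum_(i in S) x i.

Definition in_core (v : {set N} -> R) (x : N -> R) : Prop :=
  xsum x setT = v setT /\ forall S : {set N}, v S <= xsum x S.

Definition balanced_game (v : {set N} -> R) : Prop := exists x, in_core v x.

Definition effective (v : {set N} -> R) (S : {set N}) : Prop :=
  S != set0 /\ forall x, in_core v x -> xsum x S = v S.

Definition balancing_weights (B : {set {set N}}) (lam : {set N} -> R) : Prop :=
  (forall S, S \in B -> 0 < lam S) /\
  (forall i : N, \sum_(S in B | i \in S) lam S = 1).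

Definition balanced_coll (B : {set {set N}}) : Prop :=
  set0 \notin B /\ exists lam, balancing_weights B lam.

Definition minimal_balanced (B : {set {set N}}) : Prop :=
  balanced_coll B /\ forall C : {set {set N}}, C \proper B -> ~ balanced_coll C.

End Games.

(* Main.v *)
From mathcomp Require Import all_boot all_order all_algebra.
From mathcomp Require Import ring lra.
From Stdlib Require Import Classical.
Require Import Defs.
Set Implicit Arguments. Unset Strict Implicit. Unset Printing Implicit Defensive.
Import Order.TTheory GRing.Theory Num.Theory.
Local Open Scope ring_scope.

Section Game.
Variables (R : realFieldType) (N : finType).

Lemma wsum (B : {set {set N}}) (lam : {set N} -> R) (x : N -> R) :
  (forall i, \sum_(S in B | i \in S) lam S = 1) ->
  \sum_(T in B) lam T * xsum x T = xsum x setT.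
Proof.
move=> H; rewrite /xsum.
under eq_bigr do rewrite mulr_sumr.
rewrite (exchange_big_dep predT) //=.
rewrite [RHS](eq_bigl predT); last by move=> i; rewrite inE.
apply: eq_bigr => i _.
by rewrite -mulr_suml H mul1r.
Qed.

Lemma easy (B : {set {set N}}) (lam : {set N} -> R) (v : {set N} -> R) x :
  balancing_weights B lam -> v setT <= \sum_(T in B) lam T * v T ->
  in_core v x -> forall T, T \in B -> xsum x T = v T.
Proof.
move=> [hpos hsum] hle [hxN hx] T TB.
have e : \sum_(T in B) lam T * (xsum x T - v T) = 0.
  apply/eqP; rewrite eq_le; apply/andP; split; last first.
    apply: sumr_ge0 => U UB; apply: mulr_ge0; first exact: ltW (hpos U UB).
    by rewrite subr_ge0.
  under eq_bigr do rewrite mulrBr.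
  by rewrite sumrB (wsum _ hsum) hxN subr_le0.
have := psumr_eq0P _ e TB.
move=> /(_ _)/eqP; rewrite mulf_eq0 gt_eqF ?hpos //= subr_eq0 => /(_ _)/eqP; apply.
by move=> U UB; apply: mulr_ge0; [exact: ltW (hpos U UB)|rewrite subr_ge0].
Qed.
Lemma minred n : forall B : {set {set N}}, (#|B| <= n)%N -> balanced_coll R B ->
  forall S, S \in B -> exists B' : {set {set N}}, [/\ B' \subset B, minimal_balanced R B' & S \in B'].
Proof.
elim: n => [|n IH] B hB hbal S SB.
  by move: hB; rewrite leqn0 cards_eq0 => /eqP B0; move: SB; rewrite B0 inE.
case: (classic (exists C : {set {set N}}, C \proper B /\ balanced_coll R C)) => [[C [CB Cbal]]|hno]; last first.
  exists B; split => //; split => // C CB Cbal; apply: hno; exists C; done.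
have hCB : (#|C| <= n)%N by rewrite -ltnS; apply: leq_trans (proper_card CB) hB.
have sCB : C \subset B := proper_sub CB.
case SC: (S \in C).
  have [B' [h1 h2 h3]] := IH C hCB Cbal S SC.
  by exists B'; split => //; apply: subset_trans sCB.
case: hbal => B0 [lam [hlp hls]].
case: Cbal => C0 [mu [hmp hms]].
have S0 : S != set0 by apply: contraNneq B0 => <-.
have [i0 i0S] : exists i0, i0 \in S.
  case: (set_0Vmem S) => [E|[x hx]]; last by exists x.
  by move: S0; rewrite E eqxx.
have [U0 U0C] : exists U0, U0 \in C.
  have : [exists U, U \in C].
    apply: contraT; rewrite negb_exists => /forallP hn.
    have := hms i0; rewrite big1 // => [/eqP|U /andP[UC _]].
      by rewrite eq_sym oner_eq0.
    by have := hn U; rewrite UC.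
  by move=> /existsP.
case: (@arg_minP _ _ _ U0 (mem C) (fun T => lam T / mu T) U0C) => T0 T0C hT0.
have T0C' : T0 \in C := T0C.
set t := lam T0 / mu T0.
pose mu' T := if T \in C then mu T else 0.
pose w T := lam T - t * mu' T.
have wge0 : forall T, T \in B -> 0 <= w T.
  move=> T TB; rewrite /w /mu'; case: ifP => TC.
    rewrite subr_ge0 -ler_pdivlMr ?hmp //; exact: (hT0 T TC).
  by rewrite mulr0 subr0 ltW // hlp.
have wT0 : w T0 = 0.
  by rewrite /w /mu' T0C' /t divfK ?subrr // gt_eqF // hmp.
have wS : w S = lam S by rewrite /w /mu' SC mulr0 subr0.
have wsum : forall i, \sum_(T in B | i \in T) w T = 1 - t.
  move=> i; rewrite /w sumrB -(hls i) -mulr_sumr -[in RHS](mulr1 t); congr (_ - t * _).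
  rewrite -(hms i) big_mkcond [RHS]big_mkcond; apply: eq_bigr => T _.
  rewrite /mu'; case TC: (T \in C) => /=.
    by rewrite (subsetP sCB T TC).
  by case: (_ && _).
have t1 : 0 < 1 - t.
  rewrite -(wsum i0) (bigD1 S) /=; last by rewrite SB i0S.
  apply: (lt_le_trans (y := w S)); first by rewrite wS hlp.
  rewrite lerDl; apply: sumr_ge0 => T /andP[/andP[TB _] _]; exact: wge0.
pose D := [set T in B | 0 < w T].
have DB : D \proper B.
  apply/properP; split; first by apply/subsetP => T; rewrite inE => /andP[].
  exists T0; first exact: (subsetP sCB).
  by rewrite inE wT0 ltxx andbF.
have hDn : (#|D| <= n)%N by rewrite -ltnS; apply: leq_trans (proper_card DB) hB.
have SD : S \in D by rewrite inE SB wS hlp.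
have Dbal : balanced_coll R D.
  split; first by rewrite inE (negbTE B0).
  exists (fun T => w T / (1 - t)); split.
    by move=> T; rewrite inE => /andP[_ h]; apply: divr_gt0.
  move=> i; rewrite -mulr_suml -[X in X / _ = _](_ : \sum_(T in B | i \in T) w T = _).
    by rewrite wsum divff // gt_eqF.
  rewrite big_mkcond [RHS]big_mkcond; apply: eq_bigr => T _.
  rewrite inE; case TB: (T \in B) => //=.
  case: (i \in T); rewrite ?andbT ?andbF //.
  by have := wge0 T TB; rewrite le_eqVlt => /orP[/eqP <-|->]; rewrite ?ltxx.
have [B' [h1 h2 h3]] := IH D hDn Dbal S SD.
exists B'; split => //; apply: subset_trans h1 (proper_sub DB).
Qed.
End Game.
Section FM.
Variable R : realFieldType.

Lemma interval_pick (K : finType) (P Q : pred K) (lo hi : K -> R) :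
  (forall p m, P p -> Q m -> lo p <= hi m) ->
  exists t, (forall p, P p -> lo p <= t) /\ (forall m, Q m -> t <= hi m).
Proof.
move=> H.
case: (pickP P) => [p0 Pp0|noP].
  case: (@arg_maxP _ _ _ p0 P lo Pp0) => p Pp Hp.
  exists (lo p); split; first by move=> q /Hp.
  by move=> m Qm; apply: H.
case: (pickP Q) => [m0 Qm0|noQ].
  case: (@arg_minP _ _ _ m0 Q hi Qm0) => m Qm Hm.
  exists (hi m); split; last by move=> q /Hm.
  by move=> p; rewrite noP.
by exists 0; split => p; rewrite ?noP ?noQ.
Qed.

Section Trans.
Variables (K V : finType) (a : K -> V -> R) (v : V).
Let cv k := a k v.

Definition trans (f : K -> R) (k' : K + K * K) : R :=
  match k' with
  | inl k => if cv k == 0 then f k else 0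
  | inr pm => if (0 < cv pm.1) && (cv pm.2 < 0) then cv pm.1 * f pm.2 - cv pm.2 * f pm.1 else 0
  end.

Definition back (mu' : K + K * K -> R) (k : K) : R :=
  (if cv k == 0 then mu' (inl k) else 0)
  + \sum_m (if (0 < cv k) && (cv m < 0) then mu' (inr (k, m)) * - cv m else 0)
  + \sum_p (if (0 < cv p) && (cv k < 0) then mu' (inr (p, k)) * cv p else 0).

Lemma back_ge0 mu' : (forall k', 0 <= mu' k') -> forall k, 0 <= back mu' k.
Proof.
move=> H k; rewrite /back.
apply: addr_ge0; first apply: addr_ge0.
- by case: ifP.
- apply: sumr_ge0 => m _; case: ifP => // /andP[_ hm].
  by apply: mulr_ge0 => //; rewrite oppr_ge0 ltW.
- apply: sumr_ge0 => p _; case: ifP => // /andP[hp _].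
  by apply: mulr_ge0 => //; rewrite ltW.
Qed.

Lemma trans_back mu' f :
  \sum_k' mu' k' * trans f k' = \sum_k back mu' k * f k.
Proof.
rewrite big_sumType /=.
rewrite /back.
under [RHS]eq_bigr do rewrite !mulrDl.
rewrite !big_split /=.
rewrite -addrA; congr (_ + _).
  by apply: eq_bigr => k _; case: ifP; rewrite ?mul0r ?mulr0.
under [X in _ = X + _]eq_bigr do rewrite mulr_suml.
under [X in _ = _ + X]eq_bigr do rewrite mulr_suml.
rewrite [X in _ = _ + X]exchange_big /=.
rewrite !pair_bigA /= -big_split /=.
apply: eq_bigr => [[p m]] _ /=.
case: ifP => _; last by rewrite mulr0 !mul0r addr0.
ring.
Qed.

End Trans.

Lemma FM (V : finType) (n : nat) : forall (X : {set V}), (#|X| <= n)%N ->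
  forall (K : finType) (a : K -> V -> R) (b : K -> R),
  (forall k i, i \notin X -> a k i = 0) ->
  (forall x : V -> R, [exists k, \sum_i a k i * x i < b k]) ->
  exists mu : K -> R, [/\ (forall k, 0 <= mu k),
     (forall i, \sum_k mu k * a k i = 0) & 0 < \sum_k mu k * b k].
Proof.
elim: n => [|n IH] X hX K a b hsupp hinf.
  move: hX; rewrite leqn0 cards_eq0 => /eqP X0.
  have /existsP[k hk] := hinf (fun _ => 0).
  have a0 : forall k i, a k i = 0 by move=> k' i; apply: hsupp; rewrite X0 inE.
  exists (fun j => if j == k then 1 else 0); split.
  - by move=> j; case: ifP.
  - by move=> i; apply: big1 => j _; rewrite a0 mulr0.
  - rewrite (bigD1 k) //= eqxx mul1r big1 ?addr0; last first.
      by move=> j /negbTE ->; rewrite mul0r.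
    by move: hk; rewrite big1 // => i _; rewrite mulr0.
case: (set_0Vmem X) => [X0|[v vX]].
  by apply: (IH X) => //; rewrite X0 cards0.
pose X' := X :\ v.
have hX' : (#|X'| <= n)%N.
  by move: hX; rewrite /X' (cardsD1 v X) vX.
pose cv k := a k v.
pose a' k' i := trans a v (fun k => a k i) k'.
pose b' k' := trans a v b k'.
have hsupp' : forall k' i, i \notin X' -> a' k' i = 0.
  move=> k' i; rewrite /X' !inE negb_and negbK => /orP[/eqP->|hi].
    rewrite /a' /trans; case: k' => [k|[p m]] /=.
      by case: eqP.
    by case: ifP => //; rewrite mulrC subrr.
  rewrite /a' /trans; case: k' => [k|[p m]] /=.
    by case: ifP => // _; rewrite (hsupp k i hi).
  by case: ifP => // _; rewrite (hsupp m i hi) (hsupp p i hi) !mulr0 subrr.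
have hinf' : forall x : V -> R, [exists k, \sum_i a' k i * x i < b' k].
  move=> x'; apply: contraT; rewrite negb_exists => /forallP hall.
  have hall' : forall k', b' k' <= \sum_i a' k' i * x' i.
    by move=> k'; have := hall k'; rewrite -leNgt.
  pose S k := \sum_i a k i * x' i.
  pose r k := b k - S k + cv k * x' v.
  have hz : forall k, cv k = 0 -> r k <= 0.
    move=> k hk; have := hall' (inl k).
    rewrite /b' /a' /trans /= -/(cv k) hk eqxx => h.
    by rewrite /r hk mul0r addr0 subr_le0.
  have hpm : forall p m, 0 < cv p -> cv m < 0 -> cv p * r m - cv m * r p <= 0.
    move=> p m hp hm; have := hall' (inr (p, m)).
    rewrite /b' /a' /trans /= -/(cv p) -/(cv m) hp hm /=.
    have -> : \sum_i (if true then cv p * a m i - cv m * a p i else 0) * x' i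
              = cv p * S m - cv m * S p.
      by rewrite /S !mulr_sumr -sumrB; apply: eq_bigr => i _; ring.
    by rewrite /r => h; lra.
  have hlh : forall p m, 0 < cv p -> cv m < 0 -> r p / cv p <= r m / cv m.
    move=> p m /= hp hm; rewrite ler_pdivrMr // mulrAC ler_ndivlMr //.
    by have := hpm p m hp hm; lra.
  have [t [ht1 ht2]] := @interval_pick K (fun p => 0 < cv p) (fun m => cv m < 0)
      (fun k => r k / cv k) (fun k => r k / cv k) hlh.
  pose x k := if k == v then t else x' k.
  have /existsP[k hk] := hinf x.
  have ex : \sum_i a k i * x i = S k - cv k * x' v + cv k * t.
    rewrite /S (bigD1 v) //= [in RHS](bigD1 v) //= /x eqxx /cv.
    rewrite [X in _ = _ + X - _ + _](_ : _ = \sum_(i | i != v) a k i * x i).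
      by rewrite /x; ring.
    by apply: eq_bigr => i /negbTE; rewrite /x => ->.
  move: hk; rewrite ex => hk.
  have : r k <= cv k * t.
    case: (ltrgt0P (cv k)) => hc.
    - by have := ht1 k hc; rewrite ler_pdivrMr // mulrC.
    - by have := ht2 k hc; rewrite ler_ndivlMr // mulrC.
    - by rewrite hc mul0r; apply: hz.
  by rewrite /r => hh; exfalso; lra.
have [mu' [h1 h2 h3]] := IH X' hX' _ a' b' hsupp' hinf'.
exists (back a v mu'); split.
- exact: back_ge0.
- by move=> i; rewrite -trans_back; apply: h2.
- by rewrite -trans_back.
Qed.

End FM.
Theorem lemma5p3 (R : realFieldType) (N : finType) (v : {set N} -> R)
    (HN : (0 < #|N|)%N) (Hv0 : v set0 = 0) (Hbal : balanced_game v) :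
  forall S : {set N},
    effective v S <->
    exists B : {set {set N}},
      [/\ minimal_balanced R B, S \in B &
          exists lam : {set N} -> R,
            balancing_weights B lam /\ \sum_(T in B) lam T * v T = v setT].
Proof.
move=> S; split; last first.
  move=> [B [[[B0 _] _] SB [lam [hw hsum]]]]; split.
    by apply: contraNneq B0 => <-.
  move=> x hx; apply: (easy hw) => //; by rewrite hsum.
move=> [S0 heff].
case: Hbal => y0 hy0.
have y0S : forall T, effective v T -> xsum y0 T = v T.
  by move=> T [_ h]; apply: h.
have sumT : forall f : N -> R, \sum_(i in [set: N]) f i = \sum_i f i.
  by move=> f; apply: eq_bigl => i; rewrite inE.
pose V := (N + bool)%type.
pose K := (({set N} + bool) + bool)%type.
pose a : K -> V -> R := fun k j => match k with
 | inl (inl T) => match j with inl i => if i \in T then 1 else 0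
                             | inr bb => if bb then - v T else 0 end
 | inl (inr true) => match j with inl _ => -1 | inr bb => if bb then v setT else 0 end
 | inl (inr false) => match j with inl _ => 0 | inr bb => if bb then 1 else 0 end
 | inr _ => match j with inl i => if i \in S then 1 else 0
                       | inr bb => if bb then - v S else 0 end end.
pose b : K -> R := fun k => match k with inr _ => 1 | _ => 0 end.
have split_sum : forall (F : V -> R), \sum_j F j = \sum_i F (inl i) + (F (inr true) + F (inr false)).
  by move=> F; rewrite big_sumType big_bool.
have indic : forall (T : {set N}) (f : N -> R),
    \sum_i (if i \in T then 1 else 0) * f i = xsum f T.
  by move=> T f; rewrite /xsum [RHS]big_mkcond; apply: eq_bigr => i _; case: ifP; rewrite ?mul1r ?mul0r.
have hinf : forall z : V -> R, [exists k, \sum_j a k j * z j < b k].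
  move=> z; apply: contraT; rewrite negb_exists => /forallP hall.
  have hall' : forall k, b k <= \sum_j a k j * z j.
    by move=> k; have := hall k; rewrite -leNgt.
  pose xi i := z (inl i); pose t := z (inr true).
  have hT : forall T, v T * t <= xsum xi T.
    move=> T; have := hall' (inl (inl T)); rewrite split_sum /= mul0r addr0 indic.
    rewrite -/t => h; lra.
  have hN : xsum xi setT <= v setT * t.
    have := hall' (inl (inr true)); rewrite split_sum /= mul0r addr0 -/t.
    have -> : \sum_i -1 * z (inl i) = - xsum xi setT.
      by rewrite /xsum sumT -sumrN; apply: eq_bigr => i _; rewrite mulN1r.
    move=> h; lra.
  have ht : 0 <= t.
    have := hall' (inl (inr false)); rewrite split_sum /= mul0r addr0 mul1r.
    by rewrite big1 ?add0r // => i _; rewrite mul0r.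
  have hS : 1 <= xsum xi S - v S * t.
    have := hall' (inr true); rewrite split_sum /= mul0r addr0 indic -/t.
    move=> h; lra.
  pose y i := (xi i + y0 i) / (t + 1).
  have ey : forall T, xsum y T = (xsum xi T + xsum y0 T) / (t + 1).
    by move=> T; rewrite /xsum -mulr_suml big_split.
  have t1 : 0 < t + 1 by lra.
  case: hy0 => hy0N hy0T.
  have hy : in_core v y.
    split.
      rewrite ey hy0N; apply: (mulIf (lt0r_neq0 t1)); rewrite divfK ?lt0r_neq0 //.
      have := hT setT; move: hN; lra.
    move=> T; rewrite ey ler_pdivlMr //; have := hT T; have := hy0T T; lra.
  have := heff y hy; rewrite ey (heff y0) //.
  move/(congr1 (fun q => q * (t + 1))); rewrite divfK ?lt0r_neq0 // => h.
  by exfalso; lra.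
have hsupp : forall k i, i \notin [set: V] -> a k i = 0 by move=> k i; rewrite inE.
have [mu [h1 h2 h3]] := FM (leqnn #|[set: V]|) hsupp hinf.
have sumK : forall F : K -> R, \sum_k F k = \sum_T F (inl (inl T)) +
   (F (inl (inr true)) + F (inl (inr false))) + (F (inr true) + F (inr false)).
  by move=> F; rewrite !big_sumType !big_bool.
pose c := mu (inr true) + mu (inr false).
pose d := mu (inl (inr true)).
pose s := mu (inl (inr false)).
pose mT T := mu (inl (inl T)).
have hc : 0 < c.
  move: h3; rewrite sumK /= big1 ?add0r; last by move=> T _; rewrite mulr0.
  by rewrite /c !mulr0 !add0r !mulr1.
have hi : forall i : N, \sum_(T : {set N} | i \in T) mT T + (if i \in S then c else 0) = d.
  move=> i; have := h2 (inl i); rewrite sumK /=.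
  rewrite [X in X + _ + _](_ : _ = \sum_(T : {set N} | i \in T) mT T); last first.
    by rewrite [RHS]big_mkcond; apply: eq_bigr => T _; case: ifP; rewrite ?mulr1 ?mulr0.
  rewrite /c /d; case: ifP => _; rewrite ?mulr1 ?mulr0 => h; lra.
have hd : 0 < d.
  have [i0 i0S] : exists i0, i0 \in S.
    case: (set_0Vmem S) => [E|[x hx]]; last by exists x.
    by move: S0; rewrite E eqxx.
  have := hi i0; rewrite i0S => <-.
  have : 0 <= \sum_(T : {set N} | i0 \in T) mT T by apply: sumr_ge0 => T _; apply: h1.
  lra.
have hv : \sum_T mT T * v T + c * v S - s = d * v setT.
  have := h2 (inr true); rewrite sumK /=.
  under eq_bigr do rewrite mulrN.
  rewrite sumrN /c /d /s /mT => h; lra.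
have hs : 0 <= s by apply: h1.
pose rho T := (mT T + (if T == S then c else 0)) / d.
have rho0 : forall T, 0 <= rho T.
  move=> T; apply: divr_ge0; last exact: ltW.
  apply: addr_ge0; first exact: h1.
  by case: ifP => // _; exact: ltW.
pose B := [set T | (0 < rho T) && (T != set0)].
have hw : balancing_weights B rho.
  split; first by move=> T; rewrite inE => /andP[].
  move=> i.
  rewrite (_ : \sum_(T in B | i \in T) rho T = \sum_(T : {set N} | i \in T) rho T); last first.
    rewrite big_mkcond [RHS]big_mkcond; apply: eq_bigr => T _.
    rewrite inE; case iT: (i \in T); rewrite ?andbF ?andbT //.
    have -> : (T != set0) by apply/set0Pn; exists i.
    rewrite andbT; have := rho0 T; rewrite le_eqVlt => /orP[/eqP <-|->] //.
    by rewrite ltxx.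
  rewrite /rho -mulr_suml big_split /=.
  rewrite (_ : \sum_(T : {set N} | i \in T) (if T == S then c else 0) = if i \in S then c else 0).
    by rewrite hi divff // lt0r_neq0.
  rewrite big_mkcond (bigD1 S) //= eqxx big1 ?addr0; last first.
    by move=> T /negbTE ->; case: (i \in T).
  by case: (i \in S).
have SB : S \in B.
  rewrite inE S0 andbT /rho eqxx; apply: divr_gt0 => //.
  by apply: ltr_wpDl => //; apply: h1.
have hle : v setT <= \sum_(T in B) rho T * v T.
  rewrite (_ : \sum_(T in B) rho T * v T = \sum_T rho T * v T); last first.
    rewrite big_mkcond; apply: eq_bigr => T _; rewrite inE.
    case: (boolP (T == set0)) => [/eqP ->|T0]; first by rewrite Hv0 mulr0 andbF.
    rewrite andbT; have := rho0 T; rewrite le_eqVlt => /orP[/eqP <-|->] //.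
    by rewrite ltxx mul0r.
  rewrite /rho.
  under eq_bigr do rewrite mulrAC.
  rewrite -mulr_suml ler_pdivlMr //.
  under eq_bigr do rewrite mulrDl.
  rewrite big_split /= [X in _ + X](bigD1 S) //= eqxx [X in _ + (_ + X)]big1 ?addr0; last first.
    by move=> T /negbTE ->; rewrite mul0r.
  lra.
have Bbal : balanced_coll R B.
  split; first by rewrite inE eqxx andbF.
  by exists rho.
have [B' [sB' hmin SB']] := minred (leqnn #|B|) Bbal SB.
exists B'; split => //.
have [_ [lam' [hp' hs']]] := hmin.1.
exists lam'; split => //.
rewrite -hy0.1.
rewrite -(wsum y0 hs'); apply: eq_bigr => T TB'; congr (_ * _).
by rewrite (easy hw hle hy0) // (subsetP sB').
Qed.
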